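(* Let $\bar\alpha=(\alpha_1,\dots,\alpha_n)$ and $\bar z=(z_1,\dots,z_k)$ be sequences of pairwise distinct complex numbers. For every $(\boldsymbol l,\boldsymbol m)\in\mathcal Z_{kn}$, the subspace $\mathfrak P_{kn}[\boldsymbol l,\boldsymbol m]\subset\mathfrak P_{kn}$ is invariant under $\pi^{\langle n\rangle}_{\bar z}(\mathcal B^{\langle n\rangle}_{\bar\alpha})$ and under $\pi^{\langle k\rangle}_{-\bar\alpha}(\mathcal B^{\langle k\rangle}_{\bar z})$.
   Context: $\mathfrak P_{kn}$ is the space of polynomials in pairwise anticommuting variables $\xi_{ai}$ ($a\le k$, $i\le n$); the left derivation $\partial_{ai}$ sends a monomial $\xi_{c_1}\cdots\xi_{c_l}$ to $(-1)^{s-1}$ times the monomial with the $s$-th factor removed if $c_s=(a,i)$, and to $0$ otherwise. $\pi^{\langle n\rangle}_{\bar z}(e^{\langle n\rangle}_{ij}\otimes t^s)=\sum_a z_a^s\xi_{ai}\partial_{aj}$ and $\pi^{\langle k\rangle}_{-\bar\alpha}(e^{\langle k\rangle}_{ab}\otimes t^s)=\sum_i(-\alpha_i)^s\xi_{ai}\partial_{bi}$ define actions of $\mathfrak{gl}_n[t]$ and $\mathfrak{gl}_k[t]$. $\mathcal Z_{kn}$ is the set of $(\boldsymbol l,\boldsymbol m)\in\mathbb Z_{\ge0}^k\times\mathbb Z_{\ge0}^n$ with $l_a\le n$, $m_i\le k$, $\sum_al_a=\sum_im_i$; $\mathfrak P_{kn}[\boldsymbol l,\boldsymbol m]$ is spanned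 by monomials $\prod\xi_{ai}^{d_{ai}}$, $d_{ai}\in\{0,1\}$, with $\sum_ad_{ai}=m_i$ and $\sum_id_{ai}=l_a$. Bethe algebra: for $\mathfrak{gl}_N[t]$ with generators $e_{ij}$ and $g(x)=\sum_{s\ge0}(g\otimes t^s)x^{-s-1}$, and pairwise distinct $\bar\beta\in\mathbb C^N$, write $\operatorname{rdet}\bigl((\tfrac d{dx}-\beta_i)\delta_{ij}-e_{ji}(x)\bigr)_{i,j=1}^N=(d/dx)^N+\sum_iB_i(x)(d/dx)^{N-i}$ (powers of $d/dx$ on the right, $\operatorname{rdet}A=\sum_\sigma(-1)^\sigma a_{1\sigma(1)}\cdots a_{N\sigma(N)}$), $B_i(x)=\sum_{j\ge0}B_{ij}x^{-j}$; $\mathcal B^{\langle N\rangle}_{\bar\beta}$ is the subalgebra of $U(\mathfrak{gl}_N[t])$ generated by the $B_{ij}$, $j\ge1$. *)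

(* Defs.v *)
From HB Require Import structures.
From mathcomp Require Import all_boot all_order all_algebra all_fingroup.
From mathcomp Require Import Rstruct complex.
From Stdlib Require Reals.

Set Implicit Arguments.
Unset Strict Implicit.
Unset Printing Implicit Defensive.

Import Order.TTheory GRing.Theory Num.Theory.
Local Open Scope ring_scope.

Definition Cplx : fieldType := Rdefinitions.R[i].

(* differential operators  sum_p c_p(x) (d/dx)^p  (powers of d/dx on  *)
(* the right), all over a (possibly noncommutative) ring A.           *)
Section DiffOps.
Variable A : pzRingType.

(* a series f stands for  sum_{j>=0} f j * x^{-j} *)
Definition series := nat -> A.

Definition ser0 : series := fun _ => 0.
Definition ser1 : series := fun j => if j == 0%N then 1 else 0.
Definition serC (a : A) : series := fun j => if j == 0%N then a else 0.
Definition seradd (f g : series) : series := fun j => f j + g j.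
Definition seropp (f : series) : series := fun j => - f j.
Definition sermul (f g : series) : series :=
  fun j => \sum_(m < j.+1) f m * g (j - m)%N.
Definition sermuln (f : series) (c : nat) : series := fun j => f j *+ c.
(* d/dx applied to a series:  d/dx x^{-j} = -j x^{-j-1} *)
Definition serD (f : series) : series :=
  fun j => if j is j'.+1 then - (f j' *+ j') else 0.

(* a differential operator: the p-th entry is the coefficient of (d/dx)^p *)
Definition dop := seq series.

Definition dcoef (P : dop) (p : nat) : series := nth ser0 P p.

Definition dop0 : dop := [::].
Definition dop1 : dop := [:: ser1].
Definition dopD : dop := [:: ser0; ser1].
Definition dopS (f : series) : dop := [:: f].

Definition dadd (P Q : dop) : dop :=
  mkseq (fun p => seradd (dcoef P p) (dcoef Q p)) (maxn (size P) (size Q)).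
Definition dopp (P : dop) : dop := map seropp P.

(* (c (d/dx)^p) (d (d/dx)^q) = sum_r binom(p,r) c d^{(r)} (d/dx)^{p-r+q} *)
Definition dmul_term (P Q : dop) (s j p q r : nat) : A :=
  if (p - r + q)%N == s then
    sermul (dcoef P p) (iter r serD (dcoef Q q)) j *+ 'C(p, r)
  else 0.

Definition dmul (P Q : dop) : dop :=
  mkseq (fun s => fun j : nat =>
    \sum_(p < size P) \sum_(q < size Q) \sum_(r < p.+1)
      dmul_term P Q s j p q r)
    (size P + size Q).

Definition rdet (N : nat) (M : 'I_N -> 'I_N -> dop) : dop :=
  foldr dadd dop0
    [seq (let t := foldr (fun i acc => dmul (M i (s i)) acc) dop1 (enum 'I_N) in
          if odd_perm s then dopp t else t) | s : 'S_N <- enum [set: 'S_N]].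

(* Given the images  rep i j s  of  e_ij (x) t^s  in A and the scalars
   beta_i (already embedded in A), the matrix
   ((d/dx - beta_i) delta_ij - e_ji(x))_{ij},  e_ji(x) = sum_s e_ji t^s x^{-s-1}. *)
Definition gen_series (N : nat) (rep : 'I_N -> 'I_N -> nat -> A)
    (i j : 'I_N) : series :=
  fun l => if l is s.+1 then rep i j s else 0.

Definition bethe_matrix (N : nat) (rep : 'I_N -> 'I_N -> nat -> A)
    (beta : 'I_N -> A) (i j : 'I_N) : dop :=
  dadd (if i == j then dadd dopD (dopS (serC (- beta i))) else dop0)
       (dopp (dopS (gen_series rep j i))).

(* rdet = (d/dx)^N + sum_i B_i(x) (d/dx)^{N-i},  B_i(x) = sum_j B_ij x^{-j};
   this is the image of B_ij under the representation. *)
Definition bethe_coef (N : nat) (rep : 'I_N -> 'I_N -> nat -> A)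
    (beta : 'I_N -> A) (i j : nat) : A :=
  dcoef (rdet (bethe_matrix rep beta)) (N - i) j.

End DiffOps.

Inductive gen_alg (F : fieldType) (d : nat) (G : 'M[F]_d -> Prop)
    : 'M[F]_d -> Prop :=
  | ga_gen M : G M -> gen_alg G M
  | ga_one : gen_alg G 1%:M
  | ga_scale c M : gen_alg G M -> gen_alg G (c *: M)
  | ga_add M1 M2 : gen_alg G M1 -> gen_alg G M2 -> gen_alg G (M1 + M2)
  | ga_mul M1 M2 : gen_alg G M1 -> gen_alg G M2 -> gen_alg G (M1 *m M2).

(* Image of the Bethe algebra B^<N>_beta under a representation rep of gl_N[t]:
   the subalgebra generated by the images of B_ij, 1 <= i <= N, j >= 1. *)
Definition bethe_image (F : fieldType) (d N : nat)
    (rep : 'I_N -> 'I_N -> nat -> 'M[F]_d) (beta : 'I_N -> F) : 'M[F]_d -> Prop :=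
  gen_alg (fun M => exists i j : nat,
             [/\ (1 <= i <= N)%N, (1 <= j)%N &
                 M = bethe_coef rep (fun a => (beta a)%:M) i j]).

(* The Grassmann algebra P_kn with anticommuting generators xi_{ai}.  *)
(* Basis: monomials = subsets S of 'I_k * 'I_n, each written as the   *)
(* product of its variables in increasing order (order = enum_rank).  *)
(* P_kn = 'cV[F]_(dimP k n), basis vector r <-> subset enum_val r.   *)
Section Grassmann.
Variables (F : fieldType) (k n : nat).

Definition var := ('I_k * 'I_n)%type.
Definition monT := {set var}.
Definition dimP := #|{: monT}|.
Definition mon (r : 'I_dimP) : monT := enum_val (r : 'I_#|{: monT}|).
Definition varlt (u v : var) : bool := (enum_rank u < enum_rank v)%N.

(* matrix of the operator xi_u d_v:
   d_v (canonical monomial S, v at position s) = (-1)^{s-1} (S \ v),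
   xi_u (canonical monomial S') = (-1)^{#{w in S' | w < u}} (S' + u)  or 0. *)
Definition xi_d (u v : var) : 'M[F]_dimP :=
  \matrix_(r, c)
    (let S := mon c in
     if [&& v \in S, u \notin S :\ v & mon r == u |: (S :\ v)] then
       (-1) ^+ (#|[set w in S | varlt w v]| + #|[set w in S :\ v | varlt w u]|)
     else 0).

Definition pi_n (z : 'I_k -> F) (i j : 'I_n) (s : nat) : 'M[F]_dimP :=
  \sum_(a < k) (z a ^+ s) *: xi_d (a, i) (a, j).

Definition pi_k (alpha : 'I_n -> F) (a b : 'I_k) (s : nat) : 'M[F]_dimP :=
  \sum_(i < n) ((- alpha i) ^+ s) *: xi_d (a, i) (b, i).

Definition Zkn (l : 'I_k -> nat) (m : 'I_n -> nat) : Prop :=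
  [/\ forall a, (l a <= n)%N, forall i, (m i <= k)%N &
      (\sum_(a < k) l a)%N = (\sum_(i < n) m i)%N].

Definition mon_weight (l : 'I_k -> nat) (m : 'I_n -> nat) (S : monT) : bool :=
  [forall i, #|[set a | (a, i) \in S]| == m i] &&
  [forall a, #|[set i | (a, i) \in S]| == l a].

Definition in_Plm (l : 'I_k -> nat) (m : 'I_n -> nat) (v : 'cV[F]_dimP) : Prop :=
  forall r, v r 0 != 0 -> mon_weight l m (mon r).

Definition plm_invariant (l : 'I_k -> nat) (m : 'I_n -> nat) (M : 'M[F]_dimP) : Prop :=
  forall v, in_Plm l m v -> in_Plm l m (M *m v).

End Grassmann.

(* Main.v *)
Require Import Defs.
From mathcomp Require Import all_boot all_order all_algebra all_fingroup.
From mathcomp Require Import Rstruct complex.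
Set Implicit Arguments. Unset Strict Implicit. Unset Printing Implicit Defensive.
Import GRing.Theory.
Local Open Scope ring_scope.


Section Hom.
Variables (F : fieldType) (k n : nat).
Definition G := {ffun ('I_k + 'I_n) -> int}.
Definition gw (x : var k n) : G :=
  [ffun t => match t with inl a => ((x.1 == a) : nat)%:Z | inr i => ((x.2 == i) : nat)%:Z end].
Definition wt (S : monT k n) : G := \sum_(x in S) gw x.
Definition mhom (M : 'M[F]_(dimP k n)) (w : G) :=
  forall r c, M r c != 0 -> wt (mon r) = wt (mon c) + w.

Lemma hom_xi_d u v : mhom (@xi_d F k n u v) (gw u - gw v).
Proof.
move=> r c; rewrite mxE /=. case: ifP; last by rewrite eqxx.
case/and3P => vS uS /eqP -> _.
rewrite /wt big_setU1 //= (big_setD1 v vS) /=.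
by rewrite [RHS]addrC addrA subrK.
Qed.

Lemma hom0 w : mhom 0 w.
Proof. by move=> r c; rewrite mxE eqxx. Qed.

Lemma homD M N w : mhom M w -> mhom N w -> mhom (M + N) w.
Proof.
move=> hM hN r c; rewrite mxE.
case: (eqVneq (M r c) 0) => [->|/hM //]; rewrite add0r; exact: hN.
Qed.

Lemma homN M w : mhom M w -> mhom (- M) w.
Proof. by move=> hM r c; rewrite mxE oppr_eq0; exact: hM. Qed.

Lemma homZ a M w : mhom M w -> mhom (a *: M) w.
Proof.
move=> hM r c; rewrite mxE; case: (eqVneq (M r c) 0) => [->|/hM //].
by rewrite mulr0 eqxx.
Qed.

Lemma homsum I (s : seq I) (P : pred I) (f : I -> 'M[F]_(dimP k n)) w :
  (forall i, P i -> mhom (f i) w) -> mhom (\sum_(i <- s | P i) f i) w.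
Proof.
move=> h; elim/big_rec: _ => [|i x Pi hx]; first exact: hom0.
exact: homD (h i Pi) hx.
Qed.

Lemma homMn M w c : mhom M w -> mhom (M *+ c) w.
Proof.
move=> hM; elim: c => [|c ihc]; first exact: hom0.
by rewrite mulrS; apply: homD.
Qed.

Lemma homM M N w1 w2 : mhom M w1 -> mhom N w2 -> mhom (M *m N) (w2 + w1).
Proof.
move=> hM hN r c; rewrite mxE => nz.
have [j _ nzj] : exists2 j, true & M r j * N j c != 0.
  apply/exists_inP; apply: contraNT nz => /exists_inPn H.
  by apply/eqP; apply: big1 => j _; apply/eqP/negbNE/H.
have hMj : M r j != 0 by apply: contraNneq nzj => ->; rewrite mul0r.
have hNj : N j c != 0 by apply: contraNneq nzj => ->; rewrite mulr0.
by rewrite (hM _ _ hMj) (hN _ _ hNj) addrA.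
Qed.

Lemma homMr M N w1 w2 : mhom M w1 -> mhom N w2 -> mhom (M * N) (w2 + w1).
Proof. by rewrite -mulmxE; apply: homM. Qed.

Lemma homC a : mhom a%:M 0.
Proof.
move=> r c; rewrite mxE addr0; case: (eqVneq r c) => [->//|].
by rewrite mulr0n eqxx.
Qed.

Lemma hom1 : mhom 1 0.
Proof. exact: homC. Qed.

End Hom.

Section Dop.
Variables (F : fieldType) (k n : nat).
Notation A := 'M[F]_(dimP k n).
Notation mhom := (@mhom F k n).
Definition shom (f : series A) (w : G k n) := forall j, mhom (f j) w.
Definition dhom (P : dop A) (w : G k n) := forall p, shom (dcoef P p) w.

Lemma shom0 w : shom (ser0 A) w.
Proof. move=> j; exact: hom0. Qed.

Lemma shomC a : mhom a 0 -> shom (serC a) 0.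
Proof. by move=> h [|j] /=; [|exact: hom0]. Qed.

Lemma shom1 : shom (ser1 A) 0.
Proof. by move=> [|j] /=; [exact: hom1|exact: hom0]. Qed.

Lemma shomD f g w : shom f w -> shom g w -> shom (seradd f g) w.
Proof. by move=> hf hg j; apply: homD. Qed.

Lemma shomN f w : shom f w -> shom (seropp f) w.
Proof. by move=> hf j; apply: homN. Qed.

Lemma shomM f g w1 w2 : shom f w1 -> shom g w2 -> shom (sermul f g) (w2 + w1).
Proof. by move=> hf hg j; apply: homsum => i _; apply: homMr. Qed.

Lemma shomMn f w c : shom f w -> shom (sermuln f c) w.
Proof. by move=> hf j; apply: homMn. Qed.

Lemma shomDer f w : shom f w -> shom (serD f) w.
Proof. by move=> hf [|j] /=; [exact: hom0| apply/homN/homMn]. Qed.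

Lemma shomiter f w r : shom f w -> shom (iter r (@serD A) f) w.
Proof. by move=> hf; elim: r => //= r ih; apply: shomDer. Qed.

Lemma dhom0 w : dhom (dop0 A) w.
Proof. by move=> p; rewrite /dcoef nth_nil; apply: shom0. Qed.

Lemma dhomS f w : shom f w -> dhom (dopS f) w.
Proof. by move=> hf [|[|p]] //=; apply: shom0. Qed.

Lemma dhom1 : dhom (dop1 A) 0.
Proof. exact/dhomS/shom1. Qed.

Lemma dhomDer : dhom (dopD A) 0.
Proof. by move=> [|[|[|p]]] /=; [apply: shom0|apply: shom1|apply: shom0|apply: shom0]. Qed.

Lemma dhomD P Q w : dhom P w -> dhom Q w -> dhom (dadd P Q) w.
Proof.
move=> hP hQ p; rewrite /dcoef /dadd.
case: (ltnP p (maxn (size P) (size Q))) => hp.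
  by rewrite nth_mkseq //; apply: shomD.
by rewrite nth_default ?size_mkseq //; apply: shom0.
Qed.

Lemma dhomN P w : dhom P w -> dhom (dopp P) w.
Proof.
move=> hP p; rewrite /dcoef /dopp.
case: (ltnP p (size P)) => hp.
  by rewrite (nth_map (ser0 A)) //; apply: shomN; apply: hP.
by rewrite nth_default ?size_map // => j; apply: hom0.
Qed.

Lemma dhomM P Q w1 w2 : dhom P w1 -> dhom Q w2 -> dhom (dmul P Q) (w2 + w1).
Proof.
move=> hP hQ s; rewrite /dcoef /dmul.
case: (ltnP s (size P + size Q)) => hs; last first.
  by rewrite nth_default ?size_mkseq //; apply: shom0.
rewrite nth_mkseq // => j.
apply: homsum => p _; apply: homsum => q _; apply: homsum => r _.
rewrite /dmul_term; case: ifP => _; last exact: hom0.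
apply: homMn; apply: shomM => //; exact: shomiter.
Qed.

End Dop.

Section Count.
Variables (k n : nat).
Lemma pair_sum (Fn : var k n -> nat) :
  (\sum_(x : var k n) Fn x = \sum_(b < k) \sum_(i < n) Fn (b, i))%N.
Proof. by rewrite pair_bigA; apply: eq_bigr => -[]. Qed.

Lemma cnt_row (S : monT k n) a :
  (\sum_(x in S) (x.1 == a) = #|[set i | (a, i) \in S]|)%N.
Proof.
rewrite big_mkcond pair_sum (bigD1 a) //= [X in (_ + X)%N]big1 ?addn0 => [|b /negbTE nb].
  rewrite -sum1_card [RHS]big_mkcond; apply: eq_bigr => i _ /=.
  by rewrite inE eqxx; case: ifP.
by apply: big1 => i _ /=; rewrite nb; case: ifP.
Qed.

Lemma cnt_col (S : monT k n) i :
  (\sum_(x in S) (x.2 == i) = #|[set a | (a, i) \in S]|)%N.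
Proof.
rewrite big_mkcond pair_sum exchange_big (bigD1 i) //= [X in (_ + X)%N]big1 ?addn0 => [|b /negbTE nb].
  rewrite -sum1_card [RHS]big_mkcond; apply: eq_bigr => a _ /=.
  by rewrite inE eqxx; case: ifP.
by apply: big1 => a _ /=; rewrite nb; case: ifP.
Qed.

Lemma wt_row (S : monT k n) a : wt S (inl a) = #|[set i | (a, i) \in S]|%:Z.
Proof.
rewrite /wt sum_ffunE -cnt_row -[RHS]intz sumMz.
by apply: eq_bigr => x _; rewrite ffunE intz.
Qed.
Lemma wt_col (S : monT k n) i : wt S (inr i) = #|[set a | (a, i) \in S]|%:Z.
Proof.
rewrite /wt sum_ffunE -cnt_col -[RHS]intz sumMz.
by apply: eq_bigr => x _; rewrite ffunE intz.
Qed.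

Lemma wt_mon_weight l m (S1 S2 : monT k n) : wt S1 = wt S2 ->
  mon_weight l m S1 = mon_weight l m S2.
Proof.
move=> e; rewrite /mon_weight; congr (_ && _); apply: eq_forallb => x.
  by rewrite -eqz_nat -wt_col e wt_col eqz_nat.
by rewrite -eqz_nat -wt_row e wt_row eqz_nat.
Qed.

Lemma hom_inv (F : fieldType) l m (M : 'M[F]_(dimP k n)) :
  mhom M 0 -> plm_invariant l m M.
Proof.
move=> hM v hv r; rewrite mxE => nz.
have [c _ nzc] : exists2 c, true & M r c * v c 0 != 0.
  apply/exists_inP; apply: contraNT nz => /exists_inPn H.
  by apply/eqP; apply: big1 => j _; apply/eqP/negbNE/H.
have hMc : M r c != 0 by apply: contraNneq nzc => ->; rewrite mul0r.
have hvc : v c 0 != 0 by apply: contraNneq nzc => ->; rewrite mulr0.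
by rewrite (wt_mon_weight l m (_ : wt (mon r) = wt (mon c))) ?hv // (hM _ _ hMc) addr0.
Qed.
End Count.

Section Rdet.
Variables (F : fieldType) (k n N : nat).
Notation A := 'M[F]_(dimP k n).
Variables (rep : 'I_N -> 'I_N -> nat -> A) (beta : 'I_N -> A) (f : 'I_N -> G k n).
Hypothesis hrep : forall i j s, mhom (rep i j s) (f i - f j).
Hypothesis hbeta : forall i, mhom (beta i) 0.

Lemma bm_hom i j : dhom (bethe_matrix rep beta i j) (f j - f i).
Proof.
apply: dhomD.
  case: (eqVneq i j) => [<-|_]; last exact: dhom0.
  rewrite subrr; apply: dhomD; first exact: dhomDer.
  by apply/dhomS/shomC/homN.
apply/dhomN/dhomS => -[|s] /=; [exact: hom0| exact: hrep].
Qed.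

Lemma prod_hom (s : 'S_N) L :
  dhom (foldr (fun i acc => dmul (bethe_matrix rep beta i (s i)) acc) (dop1 A) L)
       (\sum_(i <- L) (f (s i) - f i)).
Proof.
elim: L => [|i L IH] /=; first by rewrite big_nil; exact: dhom1.
by rewrite big_cons addrC; apply: dhomM => //; apply: bm_hom.
Qed.

Lemma sum_perm0 (s : 'S_N) : \sum_(i <- enum 'I_N) (f (s i) - f i) = 0.
Proof.
rewrite big_enum /= sumrB; apply/eqP; rewrite subr_eq0; apply/eqP.
rewrite (reindex_inj (@perm_inj _ s^-1)) /=.
by apply: eq_big => // j; rewrite permKV.
Qed.

Lemma rdet_hom : dhom (rdet (bethe_matrix rep beta)) 0.
Proof.
rewrite /rdet; elim: (enum _) => [|s L IH] /=; first exact: dhom0.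
apply: dhomD => //.
have := @prod_hom s (enum 'I_N); rewrite sum_perm0 => h.
by case: ifP => _ //; apply: dhomN.
Qed.

Lemma bethe_coef_hom i j : mhom (bethe_coef rep beta i j) 0.
Proof. exact: rdet_hom. Qed.
End Rdet.

Lemma gen_alg_hom (F : fieldType) k n (P : 'M[F]_(dimP k n) -> Prop) M :
  (forall M, P M -> mhom M 0) -> gen_alg P M -> mhom M 0.
Proof.
move=> hP; elim => {M} [M /hP //| |c M _ ih|M1 M2 _ ih1 _ ih2|M1 M2 _ ih1 _ ih2].
- exact: homC.
- exact: homZ.
- exact: homD.
- by have := homM ih1 ih2; rewrite addr0.
Qed.

Lemma pi_n_hom (F : fieldType) k n (z : 'I_k -> F) i j s :
  mhom (@pi_n F k n z i j s)
    ([ffun t => match t with inl _ => 0 | inr i' => ((i == i') : nat)%:Z end]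
     - [ffun t => match t with inl _ => 0 | inr i' => ((j == i') : nat)%:Z end]).
Proof.
apply: homsum => a _; apply: homZ.
have -> : [ffun t => match t with inl _ => 0 | inr i' => ((i == i') : nat)%:Z end]
     - [ffun t => match t with inl _ => 0 | inr i' => ((j == i') : nat)%:Z end]
     = gw (a, i) - gw (a, j) :> G k n.
  by apply/ffunP => -[b|i']; rewrite !ffunE /= ?subrr.
exact: hom_xi_d.
Qed.

Lemma pi_k_hom (F : fieldType) k n (alpha : 'I_n -> F) a b s :
  mhom (@pi_k F k n alpha a b s)
    ([ffun t => match t with inl a' => ((a == a') : nat)%:Z | inr _ => 0 end]
     - [ffun t => match t with inl a' => ((b == a') : nat)%:Z | inr _ => 0 end]).
Proof.
apply: homsum => i _; apply: homZ.
have -> : [ffun t => match t with inl a' => ((a == a') : nat)%:Z | inr _ => 0 end]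
     - [ffun t => match t with inl a' => ((b == a') : nat)%:Z | inr _ => 0 end]
     = gw (a, i) - gw (b, i) :> G k n.
  by apply/ffunP => -[b'|i']; rewrite !ffunE /= ?subrr.
exact: hom_xi_d.
Qed.

Theorem lemma5p5 (k n : nat) (alpha : 'I_n -> Cplx) (z : 'I_k -> Cplx) :
  injective alpha -> injective z ->
  forall (l : 'I_k -> nat) (m : 'I_n -> nat), Zkn l m ->
  (forall M, bethe_image (@pi_n Cplx k n z) alpha M -> @plm_invariant Cplx k n l m M) /\
  (forall M, bethe_image (@pi_k Cplx k n alpha) z M -> @plm_invariant Cplx k n l m M).
Proof.
move=> _ _ l m _; split=> M hM; apply: hom_inv; apply: gen_alg_hom hM.
- move=> _ [i [j [_ _ ->]]]; apply: bethe_coef_hom => [i' j' s|a].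
    exact: pi_n_hom.
  exact: homC.
- move=> _ [i [j [_ _ ->]]]; apply: bethe_coef_hom => [i' j' s|a].
    exact: pi_k_hom.
  exact: homC.
Qed.
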